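(* For every complex Banach space $X$ with open unit ball $B$ and every $f\in A_u(B)$, $$Cl_B(f,0)=\bigcap_{Y}\widehat{f|_{B_Y}}\big(M_0(B_Y)\big),$$ where the intersection runs over all closed subspaces $Y\subset X$ with $\dim(X/Y)<\infty$, $B_Y$ denotes the open unit ball of $Y$, and $M_0(B_Y)$ is the fiber over $0$ of the spectrum of $A_u(B_Y)$.
   Context: For a Banach space $Z$ with open unit ball $B_Z$, $A_u(B_Z)$ is the uniform algebra of bounded holomorphic functions on $B_Z$ that are uniformly continuous; $M_0(B_Z)$ is the set of nonzero multiplicative linear functionals $\tau$ on $A_u(B_Z)$ with $\tau(z^* )=0$ for every $z^*\in Z^*$; $\hat g(\tau)=\tau(g)$ is the Gelfand transform. $Cl_{B}(f,0)$ is the set of all limits $\lim_\alpha f(x_\alpha)$ over nets $(x_\alpha)$ in $B$ converging weakly to $0$. *)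

(* Defs.v *)
From mathcomp Require Import all_boot all_algebra.
From mathcomp Require Import complex.
From mathcomp Require Import all_classical all_reals all_analysis.

Set Implicit Arguments.
Unset Strict Implicit.
Unset Printing Implicit Defensive.

Import GRing.Theory Num.Theory.
Local Open Scope classical_set_scope.
Local Open Scope ring_scope.

Section Defs.
Variables (R : realType) (X : completeNormedModType R[i]).

Definition unit_ball : set X := [set x | `|x| < 1].

Definition is_subspace (Y : set X) : Prop :=
  Y 0 /\ forall (a : R[i]) (x y : X), Y x -> Y y -> Y (a *: x + y).

(* dim (X / Y) < oo : X = Y + span(v_0, ..., v_{n-1}) for finitely many v_i *)
Definition finite_codim (Y : set X) : Prop :=
  exists (n : nat) (v : 'I_n -> X), forall x : X,
    exists (y : X) (c : 'I_n -> R[i]), Y y /\ x = y + \sum_(i < n) c i *: v i.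

Definition linear_on (Y : set X) (L : X -> R[i]) : Prop :=
  forall (a : R[i]) (x y : X), Y x -> Y y -> L (a *: x + y) = a * L x + L y.

(* L restricted to Y is a continuous linear functional on Y, i.e. L|_Y in Y^* *)
Definition dual_on (Y : set X) (L : X -> R[i]) : Prop :=
  linear_on Y L /\ exists M : R[i], forall h, Y h -> `|L h| <= M * `|h|.

Definition ball_of (Y : set X) : set X := unit_ball `&` Y.

(* g is (Frechet) holomorphic on B_Y as a function on the normed space Y *)
Definition holomorphic_on (Y : set X) (g : X -> R[i]) : Prop :=
  forall x, ball_of Y x -> exists L : X -> R[i], dual_on Y L /\
    forall eps : R[i], 0 < eps -> exists delta : R[i], 0 < delta /\
      forall h, Y h -> `|h| < delta ->
        `|g (x + h) - g x - L h| <= eps * `|h|.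

Definition in_Au (Y : set X) (g : X -> R[i]) : Prop :=
  [/\ holomorphic_on Y g,
      (exists M : R[i], forall x, ball_of Y x -> `|g x| <= M) &
      (forall eps : R[i], 0 < eps -> exists delta : R[i], 0 < delta /\
         forall x y, ball_of Y x -> ball_of Y y -> `|x - y| < delta ->
           `|g x - g y| < eps)].

(* Elements of A_u(B_Y) are represented by functions X -> C whose
   restriction to B_Y lies in A_u(B_Y); tau must only depend on that
   restriction. *)
Definition character_of (Y : set X) (tau : (X -> R[i]) -> R[i]) : Prop :=
  [/\ (forall g h, in_Au Y g -> in_Au Y h ->
         (forall x, ball_of Y x -> g x = h x) -> tau g = tau h),
      (forall (a : R[i]) g h, in_Au Y g -> in_Au Y h ->
         tau (fun x => a * g x + h x) = a * tau g + tau h),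
      (forall g h, in_Au Y g -> in_Au Y h ->
         tau (fun x => g x * h x) = tau g * tau h) &
      (exists g, in_Au Y g /\ tau g <> 0)].

Definition M0 (Y : set X) (tau : (X -> R[i]) -> R[i]) : Prop :=
  character_of Y tau /\ (forall z, dual_on Y z -> tau z = 0).

(* Cl_B(f,0): limits lim f(x_a) over nets (x_a) in B converging weakly to 0 *)
Definition cluster_set_0 (f : X -> R[i]) (lam : R[i]) : Prop :=
  exists (I : Type) (le : I -> I -> Prop) (x : I -> X),
    inhabited I /\
    (forall i, le i i) /\
    (forall i j k, le i j -> le j k -> le i k) /\
    (forall i j, exists k, le i k /\ le j k) /\
    (forall i, unit_ball (x i)) /\
    (forall z, dual_on setT z -> forall eps : R[i], 0 < eps ->
       exists i0, forall i, le i0 i -> `|z (x i)| < eps) /\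
    (forall eps : R[i], 0 < eps ->
       exists i0, forall i, le i0 i -> `|f (x i) - lam| < eps).

End Defs.

(* Main.v *)
Require Import Defs.
From mathcomp Require Import all_boot all_algebra.
From mathcomp Require Import complex.
From mathcomp Require Import all_classical all_reals all_analysis.
From mathcomp Require Import all_order.
From mathcomp Require Import ring.
From Stdlib Require Import ClassicalEpsilon.
From Stdlib Require List.
Import Order.TTheory GRing.Theory Num.Theory numFieldNormedType.Exports.
Local Open Scope classical_set_scope.
Local Open Scope ring_scope.

Section Cx.
Context {R : realType}.
Local Notation C := R[i].

Lemma pos_realC (e : C) : 0 < e -> e = ((complex.Re e)%:C)%C /\ 0 < complex.Re e.
Proof.
move=> e0; have er : e \is Num.real by apply: gtr0_real.
split; first by rewrite RRe_real.
by rewrite -ltcR (RRe_real er).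
Qed.

Lemma normC_R (x : R) : `|(x%:C)%C| = ((`|x|)%:C)%C :> C.
Proof. by rewrite normc_def /= expr0n /= addr0 sqrtr_sqr. Qed.

Lemma normC_le_ReIm (z : C) :
  `|z| <= ((`|complex.Re z|)%:C)%C + ((`|complex.Im z|)%:C)%C.
Proof.
rewrite {1}[z]complexE; apply: le_trans (ler_normD _ _) _.
rewrite normrM normC_R.
suff -> : `|'i%C : C| = 1 by rewrite mul1r normC_R.
by rewrite normc_def /= expr0n expr1n add0r sqrtr1.
Qed.

Lemma Re_le_norm (z : C) : ((`|complex.Re z|)%:C)%C <= `|z|.
Proof.
rewrite normc_def lecR -sqrtr_sqr ler_sqrt ?lerDl ?sqr_ge0 //.
by rewrite addr_ge0 ?sqr_ge0.
Qed.

Lemma Im_le_norm (z : C) : ((`|complex.Im z|)%:C)%C <= `|z|.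
Proof.
rewrite normc_def lecR -sqrtr_sqr ler_sqrt ?lerDr ?sqr_ge0 //.
by rewrite addr_ge0 ?sqr_ge0.
Qed.

Lemma pos_min {a b : C} : 0 < a -> 0 < b -> exists c, [/\ 0 < c, c <= a & c <= b].
Proof.
move=> a0 b0; have ab0 : 0 < a + b by rewrite addr_gt0.
exists (a * b / (a + b)); split.
- by rewrite divr_gt0 // mulr_gt0.
- by rewrite ler_pdivrMr // ler_pM2l // lerDr ltW.
- by rewrite ler_pdivrMr // mulrC ler_pM2l // lerDl ltW.
Qed.

Lemma small_eq0 (z : C) : (forall e : C, 0 < e -> `|z| < e) -> z = 0.
Proof.
move=> H; apply/eqP; apply: contraT => nz.
have := H `|z|; rewrite normr_gt0 nz ltxx; exact.
Qed.

Definition ulim {I : Type} (U : set_system I) (h : I -> C) (l : C) :=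
  forall e : C, 0 < e -> U [set i | `|h i - l| < e].

Lemma ulim_ex {I : Type} (U : set_system I) (h : I -> C) (M : R) :
  UltraFilter U -> (forall i, `|h i| <= (M%:C)%C) -> exists l, ulim U h l.
Proof.
move=> UU hM.
have bRe : forall i, (complex.Re (h i)) \in `[- M, M].
  move=> i; rewrite in_itv /= -ler_norml -lecR.
  exact: le_trans (Re_le_norm _) (hM i).
have bIm : forall i, (complex.Im (h i)) \in `[- M, M].
  move=> i; rewrite in_itv /= -ler_norml -lecR.
  exact: le_trans (Im_le_norm _) (hM i).
have lim1 : forall (g : I -> R), (forall i, g i \in `[- M, M]) ->
    exists a : R, forall e : R, 0 < e -> U [set i | `|a - g i| < e].
  move=> g gb.
  have UF : ProperFilter U by case: UU.
  have [|a [_ cla]] := @segment_compact R (- M) M (g @ U) _.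
    suff : U (g @^-1` `[- M, M]%classic) by [].
    by apply: filterE => i; have := gb i; rewrite inE.
  exists a => e e0.
  have [//|Uc] := in_ultra_setVsetC [set i | `|a - g i| < e] UU.
  have nb : nbhs a [set x : R | `|a - x| < e].
    by have := nbhsx_ballx a e e0; rewrite -ball_normE.
  by have [x [/= ? ?]] := cla (~` [set x | `|a - x| < e]) _ Uc nb.
have [a Ha] := lim1 _ bRe.
have [b Hb] := lim1 _ bIm.
exists ((a +i* b)%C) => e /pos_realC [-> e0].
have e20 : 0 < complex.Re e / 2 by rewrite divr_gt0.
have UF : Filter U by case: UU => -[].
apply: filterS (filterI (Ha _ e20) (Hb _ e20)) => i /= [H1 H2].
apply: le_lt_trans (normC_le_ReIm _) _.
move: H1 H2; case: (h i) => x y /= H1 H2.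
rewrite -rmorphD ltcR (splitr (complex.Re e)).
by rewrite ltrD // distrC.
Qed.

Section UlimAlg.
Context {I : Type} (U : set_system I) {PU : ProperFilter U}.

Lemma ulim_unique h l1 l2 : ulim U h l1 -> ulim U h l2 -> l1 = l2.
Proof.
move=> H1 H2; apply/eqP; rewrite -subr_eq0; apply/eqP; apply: small_eq0 => e e0.
have e20 : 0 < e / 2 by rewrite divr_gt0.
have [i /= [A B]] := filter_ex (filterI (H1 _ e20) (H2 _ e20)).
rewrite (splitr e); apply: le_lt_trans (ltrD A B).
by rewrite -(distrC l1); apply: ler_distD.
Qed.

Lemma ulim_const c : ulim U (fun _ => c) c.
Proof. by move=> e e0; apply: filterE => i /=; rewrite subrr normr0. Qed.

Lemma ulim_lin a g h lg lh : ulim U g lg -> ulim U h lh ->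
  ulim U (fun i => a * g i + h i) (a * lg + lh).
Proof.
move=> Hg Hh e e0.
have d0 : 0 < `|a| + 1 by rewrite ltr_pwDr.
have e20 : 0 < e / 2 / (`|a| + 1) by rewrite !divr_gt0.
have e2 : 0 < e / 2 by rewrite divr_gt0.
apply: filterS (filterI (Hg _ e20) (Hh _ e2)) => i /= [A B].
have -> : a * g i + h i - (a * lg + lh) = a * (g i - lg) + (h i - lh).
  by ring.
apply: le_lt_trans (ler_normD _ _) _; rewrite (splitr e) ltr_leD //; last first.
  by apply: ltW.
rewrite normrM; apply: le_lt_trans (ler_wpM2l (normr_ge0 _) (ltW A)) _.
by rewrite mulrCA gtr_pMr // ltr_pdivrMr // mul1r ltrDl.
Qed.

Lemma ulim_mul g h lg lh (M : C) : (forall i, `|g i| <= M) ->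
  ulim U g lg -> ulim U h lh -> ulim U (fun i => g i * h i) (lg * lh).
Proof.
move=> gM Hg Hh e e0.
have [i0 _] := filter_ex (filterT : U setT).
have M0 : 0 <= M by apply: le_trans (gM i0).
have d0 : 0 < M + `|lh| + 1 by rewrite ltr_pwDr // addr_ge0.
have e1 : 0 < e / (M + `|lh| + 1) by rewrite divr_gt0.
apply: filterS (filterI (Hg _ e1) (Hh _ e1)) => i /= [A B].
have -> : g i * h i - lg * lh = g i * (h i - lh) + lh * (g i - lg).
  by ring.
apply: le_lt_trans (ler_normD _ _) _; rewrite !normrM.
have H1 : `|g i| * `|h i - lh| <= M * (e / (M + `|lh| + 1)).
  by apply: ler_pM => //; apply: ltW.
have H2 : `|lh| * `|g i - lg| <= `|lh| * (e / (M + `|lh| + 1)).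
  by apply: ler_wpM2l => //; apply: ltW.
apply: le_lt_trans (lerD H1 H2) _.
rewrite -mulrDl mulrCA gtr_pMr // ltr_pdivrMr // mul1r ltrDl //.
Qed.

End UlimAlg.
End Cx.


Section Au.
Context {R : realType} {X : completeNormedModType R[i]}.
Local Notation C := R[i].

Lemma dual_bound {Y : set X} {L : X -> C} : dual_on Y L ->
  exists K : C, 0 <= K /\ forall h, Y h -> `|L h| <= K * `|h|.
Proof.
move=> [_ [M HM]]; exists `|M|; split => // h Yh.
have H := HM h Yh; apply: le_trans (H) _.
have H0 : 0 <= M * `|h| by apply: le_trans H.
by rewrite -(ger0_norm H0) normrM normr_id.
Qed.

Lemma Au_const (Y : set X) (c : C) : in_Au Y (fun _ => c).
Proof.
split.
- move=> x _; exists (fun _ => 0); split.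
    split; first by move=> a u v _ _; rewrite mulr0 addr0.
    by exists 0 => h _; rewrite normr0 mul0r.
  move=> eps e0; exists 1; split => // h _ _.
  by rewrite subrr subr0 normr0 mulr_ge0 // ltW.
- by exists `|c|.
- by move=> eps e0; exists 1; split => // x y _ _ _; rewrite subrr normr0.
Qed.

Lemma Au_restrict (Y : set X) (g : X -> C) : in_Au setT g -> in_Au Y g.
Proof.
move=> [Hh [M HM] Hu]; split.
- move=> x [Bx _]; have [L [[Ll [K HK]] HL]] := Hh x (conj Bx I).
  exists L; split.
    by split; [move=> a u v _ _; apply: Ll | exists K => h _; apply: HK].
  move=> eps e0; have [d [d0 Hd]] := HL eps e0.
  by exists d; split => // h _ hd; apply: Hd.
- by exists M => x [Bx _]; apply: HM.
- move=> eps e0; have [d [d0 Hd]] := Hu eps e0.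
  by exists d; split => // x y [Bx _] [By _]; apply: Hd.
Qed.

Lemma Au_addc (Y : set X) (c : C) (g : X -> C) : in_Au Y g ->
  in_Au Y (fun x => c + g x).
Proof.
move=> [Hh [M HM] Hu]; split.
- move=> x Bx; have [L [dL HL]] := Hh x Bx; exists L; split => //.
  move=> eps e0; have [d [d0 Hd]] := HL eps e0.
  exists d; split => // h Yh hd.
  by have := Hd h Yh hd; rewrite opprD addrACA subrr add0r.
- exists (`|c| + M) => x Bx; apply: le_trans (ler_normD _ _) _.
  by rewrite lerD2l; apply: HM.
- move=> eps e0; have [d [d0 Hd]] := Hu eps e0.
  exists d; split => // x y Bx By xy.
  by rewrite opprD addrACA subrr add0r; apply: Hd.
Qed.


Lemma holo_local {Y : set X} {g : X -> C} {x} : holomorphic_on Y g -> ball_of Y x ->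
  exists L K d1, [/\ dual_on Y L, 0 <= K, (forall h, Y h -> `|L h| <= K * `|h|),
    (forall eps : C, 0 < eps -> exists delta : C, 0 < delta /\
      forall h, Y h -> `|h| < delta -> `|g (x + h) - g x - L h| <= eps * `|h|) &
    0 < d1 /\
    forall h, Y h -> `|h| < d1 -> `|g (x + h) - g x| <= (1 + K) * `|h|].
Proof.
move=> Hh Bx; have [L [dL HL]] := Hh x Bx.
have [K [K0 HK]] := dual_bound dL.
have [d1 [d10 Hd1]] := HL 1 ltr01.
exists L, K, d1; split => //; split => // h Yh hd.
have -> : g (x + h) - g x = (g (x + h) - g x - L h) + L h by rewrite subrK.
apply: le_trans (ler_normD _ _) _; rewrite mulrDl.
by apply: lerD; [apply: Hd1 | apply: HK].
Qed.

Lemma nonvanish {Y : set X} {g : X -> C} {x} {e : C} : holomorphic_on Y g ->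
  ball_of Y x -> 0 < e -> e <= `|g x| ->
  exists d, 0 < d /\ forall h, Y h -> `|h| < d -> e / 2 <= `|g (x + h)|.
Proof.
move=> Hh Bx e0 ge.
have [L [K [d1 [dL K0 HK HL [d10 Hd1]]]]] := holo_local Hh Bx.
have K10 : 0 < 1 + K by rewrite ltr_pwDl.
have d20 : 0 < e / 2 / (1 + K) by rewrite !divr_gt0.
have [d [d0 dd1 dd2]] := pos_min d10 d20.
exists d; split => // h Yh hd.
have H1 := Hd1 h Yh (lt_le_trans hd dd1).
have H2 : (1 + K) * `|h| <= e / 2.
  rewrite mulrC -ler_pdivlMr //; apply: ltW; exact: lt_le_trans hd dd2.
have : e <= `|g (x + h)| + e / 2.
  apply: (le_trans ge); apply: le_trans (lerD (lexx _) (le_trans H1 H2)).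
  have := ler_distD (g (x + h)) (g x) 0.
  by rewrite !subr0 (distrC (g x)) addrC.
by rewrite {1}(splitr e) lerD2r.
Qed.

Lemma Au_one (Y : set X) (g : X -> C) (e : C) : in_Au Y g -> 0 < e ->
  (forall x, ball_of Y x -> e <= `|g x|) -> in_Au Y (fun x => g x * (g x)^-1).
Proof.
move=> [Hh _ _] e0 ge.
have nz : forall x, ball_of Y x -> g x != 0.
  move=> x Bx; rewrite -normr_gt0; exact: lt_le_trans e0 (ge x Bx).
split.
- move=> x Bx; exists (fun _ => 0); split.
    split; first by move=> a u v _ _; rewrite mulr0 addr0.
    by exists 0 => h _; rewrite normr0 mul0r.
  move=> eps eps0; have [d [d0 Hd]] := nonvanish Hh Bx e0 (ge x Bx).
  exists d; split => // h Yh hd.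
  have e20 : 0 < e / 2 by rewrite divr_gt0.
  have nz2 : g (x + h) != 0 by rewrite -normr_gt0 (lt_le_trans e20) // Hd.
  by rewrite (divff nz2) (divff (nz x Bx)) subrr subr0 normr0 mulr_ge0 // ltW.
- by exists 1 => x Bx; rewrite divff ?nz // normr1.
- move=> eps eps0; exists 1; split => // x y Bx By _.
  by rewrite !divff ?nz // subrr normr0.
Qed.


Lemma normV_le (z c : C) : 0 < c -> c <= `|z| -> `|z^-1| <= c^-1.
Proof.
move=> c0 cz; have z0 : 0 < `|z| by apply: lt_le_trans cz.
by rewrite normfV lef_pV2 ?posrE.
Qed.

Lemma Au_inv (Y : set X) (g : X -> C) (e : C) : in_Au Y g -> 0 < e ->
  (forall x, ball_of Y x -> e <= `|g x|) -> in_Au Y (fun x => (g x)^-1).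
Proof.
move=> [Hh _ Hu] e0 ge.
have nz : forall x, ball_of Y x -> g x != 0.
  move=> x Bx; rewrite -normr_gt0; exact: lt_le_trans e0 (ge x Bx).
have e20 : 0 < e / 2 by rewrite divr_gt0.
split.
- move=> x Bx; set a := g x.
  have a0 : a != 0 by exact: nz.
  have [L [K [d1 [[Ll _] K0 HK HL [d10 Hd1]]]]] := holo_local Hh Bx.
  have [d4 [d40 Hd4]] := nonvanish Hh Bx e0 (ge x Bx).
  exists (fun h => - (L h / (a * a))); split.
    split.
      move=> c u v Yu Yv; rewrite Ll //; ring.
    exists (K / `|a * a|) => h Yh.
    rewrite normrN normrM normfV mulrAC ler_wpM2r ?invr_ge0 //; exact: HK.
  move=> eps eps0.
  have K10 : 0 < 1 + K by rewrite ltr_pwDl.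
  have eta0 : 0 < eps * e * e / 4 by rewrite !mulr_gt0 ?invr_gt0.
  have [d2 [d20 Hd2]] := HL _ eta0.
  have d30 : 0 < eps * e * e * e / (4 * (1 + K) * (1 + K)).
    by rewrite divr_gt0 ?mulr_gt0.
  have [d12 [d120 d12a d12b]] := pos_min d10 d20.
  have [d34 [d340 d34a d34b]] := pos_min d30 d40.
  have [d [d0 da db]] := pos_min d120 d340.
  exists d; split => // h Yh hd.
  have hd1 : `|h| < d1 by apply: lt_le_trans hd (le_trans da d12a).
  have hd2 : `|h| < d2 by apply: lt_le_trans hd (le_trans da d12b).
  have hd3 : `|h| < eps * e * e * e / (4 * (1 + K) * (1 + K)).
    by apply: lt_le_trans hd (le_trans db d34a).
  have hd4 : `|h| < d4 by apply: lt_le_trans hd (le_trans db d34b).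
  set b := g (x + h).
  have be : e / 2 <= `|b| by exact: Hd4.
  have b0 : b != 0 by rewrite -normr_gt0 (lt_le_trans e20).
  have -> : b^-1 - a^-1 - - (L h / (a * a)) =
     - ((b - a - L h) * (a^-1 * b^-1)) + (b - a) * L h * (a^-1 * a^-1 * b^-1).
    by field; rewrite a0 b0.
  apply: le_trans (ler_normD _ _) _.
  have -> : eps * `|h| = eps / 2 * `|h| + eps / 2 * `|h| by rewrite -mulrDl -splitr.
  apply: lerD.
  + rewrite normrN normrM.
    apply: le_trans (ler_pM (normr_ge0 _) (normr_ge0 _) (Hd2 h Yh hd2) (_ : _ <= e^-1 * (e / 2)^-1)) _.
      by rewrite normrM; apply: ler_pM => //; apply: normV_le => //; apply: ge.
    rewrite mulrAC ler_wpM2r //.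
    have -> : eps * e * e / 4 * (e^-1 * (e / 2)^-1) = eps / 2.
      by field; rewrite lt0r_neq0.
    by [].
  + rewrite !normrM.
    have H1 := Hd1 h Yh hd1.
    have H2 : `|L h| <= (1 + K) * (eps * e * e * e / (4 * (1 + K) * (1 + K))).
      apply: le_trans (HK h Yh) _; apply: ler_pM => //; first by rewrite lerDr.
      exact: ltW.
    have H3 : `|a^-1| * `|a^-1| * `|b^-1| <= e^-1 * e^-1 * (e / 2)^-1.
      have Ha : `|a^-1| <= e^-1 by apply: normV_le => //; apply: ge.
      by apply: ler_pM; rewrite ?mulr_ge0 //; [apply: ler_pM | apply: normV_le].
    apply: le_trans (ler_pM _ _ (ler_pM _ _ H1 H2) H3) _; rewrite ?mulr_ge0 //.
    rewrite le_eqVlt; apply/orP; left; apply/eqP; field.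
    by rewrite !lt0r_neq0.
- by exists e^-1 => x Bx; apply: normV_le => //; apply: ge.
- move=> eps eps0.
  have ee0 : 0 < eps * e * e by rewrite !mulr_gt0.
  have [d [d0 Hd]] := Hu _ ee0.
  exists d; split => // x y Bx By xy.
  have -> : (g x)^-1 - (g y)^-1 = (g y - g x) * ((g x)^-1 * (g y)^-1).
    by field; rewrite !nz.
  rewrite normrM distrC.
  have H3 : `|(g x)^-1 * (g y)^-1| <= e^-1 * e^-1.
    by rewrite normrM; apply: ler_pM => //; apply: normV_le => //; apply: ge.
  apply: le_lt_trans (ler_wpM2l (normr_ge0 _) H3) _.
  rewrite -(ltr_pM2r (_ : 0 < e * e)) ?mulr_gt0 //.
  have -> : `|g x - g y| * (e^-1 * e^-1) * (e * e) = `|g x - g y|.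
    by field; rewrite lt0r_neq0.
  by rewrite mulrA; apply: Hd.
Qed.

End Au.


Section Char.
Context {R : realType} {X : completeNormedModType R[i]}.
Local Notation C := R[i].

Lemma tau_one (Y : set X) tau : character_of Y tau -> tau (fun _ => 1) = 1.
Proof.
move=> [_ _ Hm [g0 [Ag0 nz]]].
have := Hm g0 (fun _ => 1) Ag0 (Au_const Y 1).
have -> : (fun x => g0 x * 1) = g0 by apply: funext => x; rewrite mulr1.
move=> H; apply: (mulfI (_ : tau g0 != 0)); first by apply/eqP.
by rewrite mulr1 -H.
Qed.

Lemma char_approx (Y : set X) tau (f : X -> C) (lam e : C) :
  in_Au Y f -> character_of Y tau -> tau f = lam -> 0 < e ->
  exists x, ball_of Y x /\ `|f x - lam| < e.
Proof.
move=> Af ch tf e0; apply: contrapT => Hn.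
have ge : forall x, ball_of Y x -> e <= `|- lam * 1 + f x|.
  move=> x Bx; rewrite mulr1 addrC.
  rewrite (real_leNgt (gtr0_real e0) (normr_real _)); apply/negP => H.
  by apply: Hn; exists x.
have Ag : in_Au Y (fun x => - lam * 1 + f x) by apply: Au_addc.
have Ah := Au_inv _ _ _ Ag e0 ge.
have Ak := Au_one _ _ _ Ag e0 ge.
have t1 := tau_one _ _ ch.
case: ch => He Hl Hm _.
have tg : tau (fun x => - lam * 1 + f x) = 0.
  have := Hl (- lam) (fun _ => 1) f (Au_const Y 1) Af.
  by rewrite /= t1 tf mulr1 addNr.
have := Hm _ _ Ag Ah; rewrite tg mul0r.
rewrite (He _ (fun _ => 1) Ak (Au_const Y 1)) ?t1.
  by move/eqP; rewrite oner_eq0.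
move=> x Bx; rewrite divff // -normr_gt0; exact: lt_le_trans e0 (ge x Bx).
Qed.

End Char.


Section Kers.
Context {R : realType} {X : completeNormedModType R[i]}.
Local Notation C := R[i].

Lemma lin0 (Y : set X) (z : X -> C) : Y 0 -> linear_on Y z -> z 0 = 0.
Proof.
move=> Y0 zl; have := zl 1 0 0 Y0 Y0.
rewrite scale1r addr0 mul1r => H.
by apply: (@addrI _ (z 0)); rewrite -H addr0.
Qed.

Lemma linB (z : X -> C) (x y : X) : linear_on setT z -> z (x - y) = z x - z y.
Proof.
move=> zl; have := zl (-1) y x I I.
by rewrite scaleN1r mulN1r addrC [- z y + _]addrC.
Qed.

Definition kers (s : seq (X -> C)) : set X :=
  [set x | forall z, List.In z s -> dual_on setT z -> z x = 0].

Lemma kers_subspace s : is_subspace (kers s).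
Proof.
split.
  by move=> z _ [zl _]; apply: (lin0 setT).
move=> a x y Hx Hy z zs dz; have [zl _] := dz.
by rewrite zl // Hx // Hy // mulr0 addr0.
Qed.

Lemma kers_closed s : closed (kers s).
Proof.
move=> x clx z zs dz; have [zl _] := dz.
have [K [K0 HK]] := dual_bound dz.
apply: small_eq0 => e e0.
have K10 : 0 < K + 1 by rewrite ltr_pwDr.
have r0 : 0 < e / (K + 1) by rewrite divr_gt0.
have [y [ky bxy]] := clx _ (nbhsx_ballx x _ r0).
move: bxy; rewrite -ball_normE /= => bxy.
have -> : z x = z (x - y) by rewrite linB // (ky z zs dz) subr0.
apply: le_lt_trans (HK _ I) _.
apply: le_lt_trans (ler_wpM2l K0 (ltW bxy)) _.
by rewrite mulrCA gtr_pMr // ltr_pdivrMr // mul1r ltrDl.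
Qed.


Lemma codim_mono {Y Y' : set X} : (forall x, Y x -> Y' x) ->
  finite_codim Y -> finite_codim Y'.
Proof.
move=> sub [n [v Hv]]; exists n, v => x.
by have [y [c [Yy ->]]] := Hv x; exists y, c; split => //; apply: sub.
Qed.

Lemma codim_step (Y : set X) (z : X -> C) : is_subspace Y -> linear_on setT z ->
  finite_codim Y -> finite_codim (Y `&` [set x | z x = 0]).
Proof.
move=> [Y0 Ys] zl [n [v Hv]].
have z0 : z 0 = 0 by apply: (lin0 setT).
case: (pselect (exists w, Y w /\ z w <> 0)) => [[w [Yw zw]]|nw]; last first.
  exists n, v => x; have [y [c [Yy ->]]] := Hv x; exists y, c; split => //.
  split => //=; apply: contrapT => H; apply: nw; by exists y.
pose u := (z w)^-1 *: w + 0.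
have Yu : Y u by apply: Ys.
have zu : z u = 1 by rewrite zl // z0 addr0 mulVf //; apply/eqP.
pose v' := fun i : 'I_n.+1 => if unlift ord0 i is Some j then v j else u.
exists n.+1, v' => x; have [y [c [Yy ->]]] := Hv x.
exists ((- z y) *: u + y), (fun i => if unlift ord0 i is Some j then c j else z y).
split.
  split; first by apply: Ys.
  by rewrite /= zl // zu mulr1 addNr.
have E : \sum_(i < n) (if unlift ord0 (lift ord0 i) is Some j then c j else z y)
    *: v' (lift ord0 i) = \sum_(i < n) c i *: v i.
  by apply: eq_bigr => i _; rewrite /v' liftK.
rewrite big_ord_recl E /v' unlift_none.
by apply/esym; rewrite scaleNr -addrA addrCA addKr.
Qed.

Lemma kers_codim s : finite_codim (kers s).
Proof.
elim: s => [|z s IH].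
  by exists 0%N, (fun _ => 0) => x; exists x, (fun _ => 0); split => //; rewrite big_ord0 addr0.
case: (pselect (dual_on setT z)) => [dz|ndz].
  have [zl _] := dz.
  apply: (codim_mono _ (codim_step _ _ (kers_subspace s) zl IH)).
  by move=> x [kx zx] w /= [<-|ws] dw //; apply: kx.
apply: (codim_mono _ IH) => x kx w /= [<-|ws] dw //; by [apply: kx].
Qed.


Lemma rhs_to_lhs (f : X -> C) (lam : C) : in_Au setT f ->
  (forall Y : set X, is_subspace Y -> closed Y -> finite_codim Y ->
       exists tau, M0 Y tau /\ tau f = lam) -> cluster_set_0 f lam.
Proof.
move=> Af H.
have pt : forall s (n : nat), exists x,
    ball_of (kers s) x /\ `|f x - lam| < (n.+1%:R)^-1.
  move=> s n.
  have [tau [[ch _] tf]] := H (kers s) (kers_subspace s) (kers_closed s) (kers_codim s).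
  apply: (char_approx _ _ _ _ _ (Au_restrict _ _ Af) ch tf).
  by rewrite invr_gt0 ltr0n.
pose xs := fun p : seq (X -> C) * nat => epsilon (inhabits (0 : X))
  (fun x => ball_of (kers p.1) x /\ `|f x - lam| < (p.2.+1%:R)^-1).
have xsP : forall p, ball_of (kers p.1) (xs p) /\ `|f (xs p) - lam| < (p.2.+1%:R)^-1.
  by move=> p; apply: (epsilon_spec (inhabits (0 : X)) _ (pt p.1 p.2)).
exists (seq (X -> C) * nat)%type,
  (fun p q => (forall z, List.In z p.1 -> List.In z q.1) /\ (p.2 <= q.2)%N), xs.
split; first exact: inhabits ([::], 0%N).
split; first by move=> i; split.
split.
  move=> i j k [a1 b1] [a2 b2]; split; first by move=> z /a1 /a2.
  exact: leq_trans b1 b2.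
split.
  move=> i j; exists (i.1 ++ j.1, maxn i.2 j.2); split; split.
  - by move=> z zi; apply: List.in_or_app; left.
  - exact: leq_maxl.
  - by move=> z zi; apply: List.in_or_app; right.
  - exact: leq_maxr.
split; first by move=> i; case: (xsP i) => -[].
split.
  move=> z dz eps e0; exists ([:: z], 0%N) => i [sub _].
  have [[_ kx] _] := xsP i.
  by rewrite (kx z (sub z (or_introl erefl)) dz) normr0.
move=> eps e0; have [re r0] := pos_realC _ e0.
have [k Hk] := ltr_add_invr r0; rewrite add0r in Hk.
exists ([::], k) => i [_ ki]; have [_ Hf] := xsP i.
apply: lt_le_trans Hf _.
apply: le_trans (_ : (k.+1%:R : C)^-1 <= eps).
  by rewrite lef_pV2 ?posrE ?ltr0n // ler_nat ltnS.
rewrite re -(rmorph_nat (real_complex R)) -fmorphV lecR; exact: ltW.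
Qed.

End Kers.


Section Proj.
Context {R : realType} {X : completeNormedModType R[i]}.
Local Notation C := R[i].

Lemma sum_lin n (c : 'I_n -> X -> C) (v : 'I_n -> X) :
  (forall i, linear_on setT (c i)) -> forall a x y,
  \sum_i c i (a *: x + y) *: v i =
    a *: \sum_i c i x *: v i + \sum_i c i y *: v i.
Proof.
move=> H a x y; rewrite scaler_sumr -big_split; apply: eq_bigr => i _.
by rewrite (H i) // scalerDl scalerA.
Qed.

Lemma sum_bound n (c : 'I_n -> X -> C) (v : 'I_n -> X) :
  (forall i, dual_on setT (c i)) ->
  exists K : C, 0 <= K /\ forall x, `|\sum_i c i x *: v i| <= K * `|x|.
Proof.
elim: n c v => [|n IH] c v H.
  by exists 0; split => // x; rewrite big_ord0 normr0 mul0r.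
have [K1 [K10 HK1]] := IH (fun i => c (lift ord0 i)) (fun i => v (lift ord0 i))
  (fun i => H _).
have [K0 [K00 HK0]] := dual_bound (H ord0).
exists (K0 * `|v ord0| + K1); split; first by rewrite addr_ge0 ?mulr_ge0.
move=> x; rewrite big_ord_recl; apply: le_trans (ler_normD _ _) _.
rewrite mulrDl lerD // normrZ mulrAC ler_wpM2r //; exact: HK0.
Qed.

Lemma sum_lin_dual n (c : 'I_n -> X -> C) (v : 'I_n -> X) :
  (forall i, dual_on setT (c i)) ->
  exists K : C, 0 <= K /\ forall x, `|x - \sum_i c i x *: v i| <= K * `|x|.
Proof.
move=> H; have [K [K0 HK]] := sum_bound n c v H.
exists (1 + K); split; first by rewrite addr_ge0.
move=> x; have H1 := ler_normB x (\sum_i c i x *: v i).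
apply: (le_trans H1).
by rewrite mulrDl mul1r lerD.
Qed.


Lemma archC (e : C) : 0 < e -> exists N : nat, (N.+1%:R : C)^-1 < e.
Proof.
move=> e0; have [re r0] := pos_realC _ e0.
have [k Hk] := ltr_add_invr r0; rewrite add0r in Hk.
exists k; rewrite re -(rmorph_nat (real_complex R)) -fmorphV ltcR //.
Qed.

Lemma invS_le (N k : nat) : (N <= k)%N -> (k.+1%:R : C)^-1 <= (N.+1%:R)^-1.
Proof. by move=> Nk; rewrite lef_pV2 ?posrE ?ltr0n // ler_nat ltnS. Qed.

Lemma ulim_exC {I : Type} (U : set_system I) (h : I -> C) (M : C) :
  UltraFilter U -> (forall i, `|h i| <= M) -> exists l, ulim U h l.
Proof.
move=> UU hM; have PU : ProperFilter U by case: UU.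
have [i0 _] := filter_ex (filterT : U setT).
have M0 : 0 <= M by apply: le_trans (hM i0).
apply: (ulim_ex _ _ (complex.Re M) UU) => i.
by rewrite RRe_real ?ger0_real.
Qed.

Lemma sep_closed (Y : set X) (w : X) : closed Y -> ~ Y w ->
  exists d : C, 0 < d /\ forall y, Y y -> d <= `|w - y|.
Proof.
move=> cY nYw.
have : ~ closure Y w by move=> /cY.
move=> /existsNP [B /not_implyP [nB nYB]].
have /nbhs_ballP [r /= r0 rB] := nB.
exists r; split => // y Yy.
rewrite (real_leNgt (gtr0_real r0) (normr_real _)); apply/negP => H.
apply: nYB; exists y; split => //; apply: rB.
by rewrite -ball_normE.
Qed.


Lemma coef_bound (Y : set X) (w : X) (d : C) : is_subspace Y ->
  (forall y, Y y -> d <= `|w - y|) ->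
  forall y t, Y y -> `|t| * d <= `|y + t *: w|.
Proof.
move=> [Y0 Ys] Hd y t Yy.
have [->|t0] := eqVneq t 0.
  by rewrite normr0 mul0r normr_ge0.
have Yy' : Y (- t^-1 *: y + 0) by apply: (Ys).
have -> : y + t *: w = t *: (w - (- t^-1 *: y + 0)).
  by rewrite addr0 scaleNr scalerBr scalerN opprK scalerA divff // scale1r addrC.
by rewrite normrZ ler_wpM2l // Hd.
Qed.

Definition line_sum (Y : set X) (w : X) : set X :=
  [set u | exists y t, Y y /\ u = y + t *: w].

Lemma line_sum_subspace Y w : is_subspace Y -> is_subspace (line_sum Y w).
Proof.
move=> [Y0 Ys]; split; first by exists 0, 0; rewrite scale0r addr0.
move=> a _ _ [y1 [t1 [Y1 ->]]] [y2 [t2 [Y2 ->]]].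
exists (a *: y1 + y2), (a * t1 + t2); split; first by apply: (Ys).
by rewrite scalerDr scalerDl scalerA addrACA.
Qed.

Lemma line_closed (Y : set X) (w : X) (d : C) : is_subspace Y -> closed Y ->
  0 < d -> (forall y, Y y -> d <= `|w - y|) -> closed (line_sum Y w).
Proof.
move=> sY cY d0 Hd x clx.
pose P k (p : X * C) := Y p.1 /\ `|x - (p.1 + p.2 *: w)| < (k.+1%:R : C)^-1.
have Pex : forall k, exists p, P k p.
  move=> k; have r0 : 0 < (k.+1%:R : C)^-1 by rewrite invr_gt0 ltr0n.
  have [u [[y [t [Yy ->]]] bu]] := clx _ (nbhsx_ballx x _ r0).
  by exists (y, t); split => //; move: bu; rewrite -ball_normE.
pose ps k := epsilon (inhabits ((0 : X), (0 : C))) (P k).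
have psP : forall k, P k (ps k) := fun k => epsilon_spec _ _ (Pex k).
have tb : forall k, `|(ps k).2| <= (`|x| + 1) / d.
  move=> k; have [Yk Hk] := psP k.
  rewrite ler_pdivlMr //; apply: le_trans (coef_bound _ _ _ sY Hd _ _ Yk) _.
  apply: le_trans (_ : `|x| + `|x - ((ps k).1 + (ps k).2 *: w)| <= _).
    have := ler_distD x ((ps k).1 + (ps k).2 *: w) 0.
    by rewrite !subr0 [`|x| + _]addrC distrC.
  rewrite lerD2l; apply: (le_trans (ltW Hk)).
  by rewrite invf_le1 ?ler1n ?ltr0n.
have [U [UU sU]] := @ultraFilterLemma nat \oo _.
have PU : ProperFilter U by case: UU.
have [t Ht] := ulim_exC U (fun k => (ps k).2) _ UU tb.
have Yx : Y (x - t *: w).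
  apply: cY => B /nbhs_ballP [r /= r0 rB].
  have r20 : 0 < r / 2 by rewrite divr_gt0.
  have eta0 : 0 < r / 2 / (`|w| + 1) by rewrite !divr_gt0 ?ltr_pwDr.
  have [N HN] := archC _ r20.
  have [k [/= kN kt]] := filter_ex (filterI (sU _ (nbhs_infty_ge N)) (Ht _ eta0)).
  have [Yk Hk] := psP k.
  exists (ps k).1; split => //; apply: rB; rewrite -ball_normE /=.
  have -> : x - t *: w - (ps k).1 =
      (x - ((ps k).1 + (ps k).2 *: w)) + ((ps k).2 - t) *: w.
    by rewrite scalerBl opprD !addrA subrK addrAC.
  apply: le_lt_trans (ler_normD _ _) _.
  rewrite (splitr r); apply: ltr_leD.
    by apply: lt_le_trans Hk (le_trans (invS_le _ _ kN) (ltW HN)).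
  rewrite normrZ; apply: le_trans (ler_wpM2r (normr_ge0 _) (ltW kt)) _.
  by rewrite mulrAC -mulrA ger_pMr // ler_pdivrMr ?ltr_pwDr // mul1r lerDl ler01.
exists (x - t *: w); exists t; split => //; by rewrite subrK.
Qed.


Lemma dual0 : dual_on (setT : set X) (fun _ => 0).
Proof.
split; first by move=> a u v _ _; rewrite mulr0 addr0.
by exists 0 => h _; rewrite normr0 mul0r.
Qed.

Lemma proj_exists n : forall (Y : set X) (v : 'I_n -> X), is_subspace Y -> closed Y ->
  (forall x, exists y c, Y y /\ x = y + \sum_(i < n) c i *: v i) ->
  exists c : 'I_n -> X -> C, (forall i, dual_on setT (c i)) /\
    forall x, Y (x - \sum_i c i x *: v i).
Proof.
elim: n => [|n IH] Y v sY cY Hv.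
  exists (fun _ _ => 0); split; first by case.
  by move=> x; have [y [c [Yy ->]]] := Hv x; rewrite !big_ord0 addr0 subr0.
pose w := v ord0; pose v' := fun i => v (lift ord0 i).
pose Y' := line_sum Y w.
have sY' : is_subspace Y' by apply: line_sum_subspace.
have Hv' : forall x, exists y c, Y' y /\ x = y + \sum_(i < n) c i *: v' i.
  move=> x; have [y [c [Yy ->]]] := Hv x.
  exists (y + c ord0 *: w), (fun i => c (lift ord0 i)); split.
    by exists y, (c ord0).
  by rewrite big_ord_recl addrA.
have [Yw|nYw] := pselect (Y w).
  have eqY : Y' = Y.
    apply/seteqP; split => u.
      move=> [y [t [Yy ->]]]; have [_ Ys] := sY.
      by rewrite addrC; apply: (Ys).
    by move=> Yu; exists u, 0; rewrite scale0r addr0.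
  have cY' : closed Y' by rewrite eqY.
  have [c' [dc' Hc']] := IH Y' v' sY' cY' Hv'.
  exists (fun i => if unlift ord0 i is Some j then c' j else (fun _ => 0)); split.
    by move=> i; case: (unlift ord0 i) => [j|] //; exact: dual0.
  move=> x; rewrite big_ord_recl unlift_none scale0r add0r.
  have E : \sum_(i < n) (if unlift ord0 (lift ord0 i) is Some j then c' j
      else (fun _ => 0)) x *: v (lift ord0 i) = \sum_(i < n) c' i x *: v' i.
    by apply: eq_bigr => i _; rewrite liftK.
  by rewrite E -eqY.
have [d [d0 Hd]] := sep_closed _ _ cY nYw.
have cY' : closed Y' by apply: (line_closed _ _ _ sY cY d0 Hd).
have [c' [dc' Hc']] := IH Y' v' sY' cY' Hv'.
have [Y0 Ys] := sY.
pose phi := fun u => epsilon (inhabits (0 : C)) (fun t => Y (u - t *: w)).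
have phiP : forall u, Y' u -> Y (u - phi u *: w).
  move=> u [y [t [Yy ->]]]; apply: (epsilon_spec (inhabits (0 : C))
     (fun t0 => Y (y + t *: w - t0 *: w))).
  by exists t; rewrite addrK.
have uniq : forall u t1 t2, Y (u - t1 *: w) -> Y (u - t2 *: w) -> t1 = t2.
  move=> u t1 t2 H1 H2; apply: contrapT => ne.
  have Hd12 : Y ((t1 - t2)^-1 *: ((- 1) *: (u - t1 *: w) + (u - t2 *: w)) + 0).
    by apply: (Ys) => //; apply: (Ys).
  apply: nYw; move: Hd12; rewrite addr0 scaleN1r opprB addrA subrK.
  rewrite -scalerBl scalerA mulVf ?scale1r //.
  by rewrite subr_eq0; apply/eqP.
pose T := fun x => x - \sum_i c' i x *: v' i.
have TY : forall x, Y' (T x) := Hc'.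
have Tlin : forall (a : C) x y, T (a *: x + y) = a *: T x + T y.
  move=> a x y; rewrite /T sum_lin; last by move=> i; case: (dc' i).
  by rewrite scalerBr opprD addrACA.
have [K [K0 HK]] := sum_lin_dual n c' v' dc'.
pose c0 := fun x => phi (T x).
have c0dual : dual_on setT c0.
  split.
    move=> a x y _ _; rewrite /c0 Tlin.
    apply: (uniq (a *: T x + T y)); first by apply: phiP; have [_ Ys'] := sY'; apply: Ys'; apply: TY.
    have -> : a *: T x + T y - (a * phi (T x) + phi (T y)) *: w =
        a *: (T x - phi (T x) *: w) + (T y - phi (T y) *: w).
      by rewrite scalerDl -scalerA [in RHS]scalerBr opprD addrACA.
    by apply: (Ys); apply: phiP.
  exists (K / d) => h _.
  rewrite mulrAC ler_pdivlMr //.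
  apply: le_trans (HK h); rewrite /c0.
  have := coef_bound _ _ _ sY Hd _ (phi (T h)) (phiP _ (TY h)).
  by rewrite subrK.
exists (fun i => if unlift ord0 i is Some j then c' j else c0); split.
  by move=> i; case: (unlift ord0 i) => [j|] //.
move=> x; rewrite big_ord_recl unlift_none.
have E : \sum_(i < n) (if unlift ord0 (lift ord0 i) is Some j then c' j
    else c0) x *: v (lift ord0 i) = \sum_(i < n) c' i x *: v' i.
  by apply: eq_bigr => i _; rewrite liftK.
rewrite E opprD addrCA.
by rewrite addrC; exact: (phiP _ (TY x)).
Qed.

End Proj.


Section L2R.
Context {R : realType} {X : completeNormedModType R[i]}.
Local Notation C := R[i].

Lemma lhs_to_rhs (f : X -> C) (lam : C) : in_Au setT f -> cluster_set_0 f lam ->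
  forall Y : set X, is_subspace Y -> closed Y -> finite_codim Y ->
    exists tau, M0 Y tau /\ tau f = lam.
Proof.
move=> Af [I [le [x [[i0] [lrefl [ltrans [ldir [xB [xw xf]]]]]]]]] Y sY cY [n [v Hv]].
pose F := filter_from setT (fun j => [set i | le j i]).
have FF : Filter F.
  apply: filter_from_filter; first by exists i0.
  move=> a b _ _; have [k [ak bk]] := ldir a b; exists k => // i ki.
  by split; [exact: ltrans ak ki | exact: ltrans bk ki].
have PF : ProperFilter F by apply: filter_from_proper => j _; exists j; apply: lrefl.
have ev : forall P : I -> Prop, (exists j, forall i, le j i -> P i) -> F [set i | P i].
  by move=> P [j Hj]; exists j.
have [U [UU sU]] := ultraFilterLemma PF.
have PU : ProperFilter U by case: UU.
have [c [dc Hc]] := proj_exists n Y v sY cY Hv.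
have [Y0 Ys] := sY.
pose Px := fun u => \sum_j c j u *: v j.
pose Q := fun u => u - Px u.
have QY : forall u, Y (Q u) := Hc.
have [K [K0 HK]] := sum_lin_dual n c v dc.
have Qlin : forall (a : C) u w, Q (a *: u + w) = a *: Q u + Q w.
  move=> a u w; rewrite /Q /Px sum_lin; last by move=> i; case: (dc i).
  by rewrite scalerBr opprD addrACA.
have Pto0 : forall e : C, 0 < e -> F [set i | `|Px (x i)| < e].
  move=> e e0; pose S := \sum_j `|v j|.
  have S0 : 0 <= S by apply: sumr_ge0 => j _.
  have S10 : 0 < S + 1 by rewrite ltr_pwDr.
  have eta0 : 0 < e / (S + 1) by rewrite divr_gt0.
  have H : F [set i | forall j, `|c j (x i)| < e / (S + 1)].
    apply: (@filter_forall I 'I_n (fun j i => `|c j (x i)| < e / (S + 1)) F FF).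
    move=> j; apply: ev; exact: xw (c j) (dc j) _ eta0.
  apply: filterS H => i /= Hi.
  apply: le_lt_trans (ler_norm_sum _ _ _) _.
  apply: le_lt_trans (_ : _ <= \sum_j e / (S + 1) * `|v j|) _.
    apply: ler_sum => j _; rewrite normrZ; apply: ler_wpM2r => //.
    exact: ltW.
  rewrite -mulr_sumr -/S mulrAC ltr_pdivrMr // ltr_pM2l //.
  by rewrite ltrDl.
pose s := fun i => (1 + `|Px (x i)|)^-1.
have s0 : forall i, 0 < s i by move=> i; rewrite invr_gt0 ltr_pwDl.
pose y := fun i => s i *: Q (x i).
have yY : forall i, Y (y i) by move=> i; rewrite /y -[_ *: _]addr0; apply: (Ys).
have Qb : forall i, `|Q (x i)| < 1 + `|Px (x i)|.
  move=> i; apply: le_lt_trans (ler_normB _ _) _; rewrite ltrD2r.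
  exact: (xB i).
have yB : forall i, ball_of Y (y i).
  move=> i; split => //; rewrite /unit_ball /= /y normrZ gtr0_norm //.
  by rewrite mulrC ltr_pdivrMr ?ltr_pwDl // mul1r.
have yx : forall i, `|y i - x i| <= `|Px (x i)| + `|Px (x i)|.
  move=> i; set p := `|Px (x i)|; set q := Q (x i).
  have xe : x i = q + Px (x i) by rewrite /q /Q subrK.
  have p0 : 0 <= p by apply: normr_ge0.
  have p10 : 0 < 1 + p by rewrite ltr_pwDl.
  have -> : y i - x i = (s i - 1) *: q - Px (x i).
    by rewrite {1}xe /y -/q scalerBl scale1r opprD addrA.
  apply: le_trans (ler_normB _ _) _; rewrite lerD2r normrZ.
  have -> : s i - 1 = - (p / (1 + p)).
    by rewrite /s -/p; field; rewrite lt0r_neq0.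
  rewrite normrN normrM normfV (ger0_norm p0) (gtr0_norm p10).
  apply: le_trans (ler_wpM2l _ (ltW (Qb i))) _; first by rewrite divr_ge0 // ltW.
  by rewrite mulrAC -mulrA divff ?mulr1 // lt0r_neq0.
have yxto0 : forall e : C, 0 < e -> F [set i | `|y i - x i| < e].
  move=> e e0; have e20 : 0 < e / 2 by rewrite divr_gt0.
  apply: filterS (Pto0 _ e20) => i /= Hi.
  by apply: le_lt_trans (yx i) _; rewrite (splitr e) ltrD.
have fto : forall e : C, 0 < e -> F [set i | `|f (y i) - lam| < e].
  move=> e e0; have e20 : 0 < e / 2 by rewrite divr_gt0.
  case: Af => _ _ Hu; have [d [d0 Hd]] := Hu _ e20.
  apply: filterS (filterI (yxto0 _ d0) (ev _ (xf _ e20))) => i /= [A B].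
  apply: le_lt_trans (ler_distD (f (x i)) _ _) _; rewrite (splitr e) ltrD //.
  have By : ball_of setT (y i) by case: (yB i).
  have Bx : ball_of setT (x i) by split => //; apply: xB.
  exact: Hd By Bx A.
have zto : forall z, dual_on Y z -> forall e : C, 0 < e ->
    F [set i | `|z (y i)| < e].
  move=> z dz e e0; have [zl _] := dz.
  have [Kz [Kz0 HKz]] := dual_bound dz.
  have zQd : dual_on setT (fun u => z (Q u)).
    split; first by move=> a u w _ _; rewrite Qlin zl.
    exists (Kz * K) => h _; rewrite -mulrA; apply: le_trans (HKz _ (QY h)) _.
    by apply: ler_wpM2l => //; exact: HK.
  apply: filterS (ev _ (xw _ zQd e e0)) => i /= Hi.
  have -> : y i = s i *: Q (x i) + 0 by rewrite addr0.
  rewrite zl // (lin0 Y) // addr0 normrM gtr0_norm //.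
  apply: le_lt_trans Hi; apply: ler_piMl => //.
  by rewrite /s invf_le1 ?ltr_pwDl // lerDl.
pose tau := fun g : X -> C =>
  epsilon (inhabits (0 : C)) (ulim U (fun i => g (y i))).
have tauP : forall g l, ulim U (fun i => g (y i)) l -> tau g = l.
  move=> g l H.
  have H' := epsilon_spec (inhabits (0 : C)) _ (ex_intro _ l H).
  exact: (ulim_unique U _ _ _ H' H).
have tauA : forall g, in_Au Y g -> ulim U (fun i => g (y i)) (tau g).
  move=> g [_ [M HM] _].
  have [l Hl] := ulim_exC U (fun i => g (y i)) M UU (fun i => HM _ (yB i)).
  by rewrite (tauP _ _ Hl).
exists tau; split; last first.
  by apply: tauP => e e0; apply: sU; exact: fto.
split; last first.
  move=> z dz; apply: tauP => e e0; apply: sU.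
  by apply: filterS (zto z dz e e0) => i /=; rewrite subr0.
split.
- move=> g h Ag Ah Egh; rewrite /tau.
  have -> : (fun i => g (y i)) = (fun i => h (y i)).
    by apply: funext => i; apply: Egh.
  by [].
- move=> a g h Ag Ah; apply: tauP; apply: ulim_lin; exact: tauA.
- move=> g h Ag Ah; case: (Ag) => _ [M HM] _; apply: tauP.
  by apply: (ulim_mul U _ _ _ _ M) => [i||]; [exact: HM | exact: tauA | exact: tauA].
- exists (fun _ => 1); split; first exact: Au_const.
  by rewrite (tauP _ 1 (ulim_const U 1)); apply/eqP; rewrite oner_eq0.
Qed.

End L2R.


Theorem proposition2p6 (R : realType) (X : completeNormedModType R[i])
  (f : X -> R[i]) :
  in_Au setT f ->
  forall lam : R[i],
    cluster_set_0 f lam <->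
    (forall Y : set X, is_subspace Y -> closed Y -> finite_codim Y ->
       exists tau, M0 Y tau /\ tau f = lam).
Proof.
move=> Af lam; split; first exact: lhs_to_rhs.
exact: rhs_to_lhs.
Qed.
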